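(* Let $\mathcal{A}$ be a finite set of hyperplanes through $0$ in a complex vector space $V_{\mathbb{C}}$, let $H\in\mathcal{A}$, and let $\sigma$ be an ordering of $\mathcal{A}$ compatible with $H$. Then for every $k\ge 1$, $$\mathrm{BCB}^k_\sigma(\mathcal{A})=\mathrm{BCB}^k_{\sigma\setminus H}(\mathcal{A}\setminus\{H\})\ \cup\ \big\{(l_\sigma(K_1),\dots,l_\sigma(K_{k-1}),H)\ :\ (K_1,\dots,K_{k-1})\in \mathrm{BCB}^{k-1}_{\sigma|H}(\mathcal{A}|H)\big\}.$$
   Context: For an arrangement $\mathcal{B}$ (finite set of hyperplanes through $0$ in a vector space), a set of its hyperplanes is independent if their defining linear forms (on the ambient space of $\mathcal{B}$) are linearly independent; $\mathrm{Or}^k(\mathcal{B})$ is the set of ordered independent $k$-tuples of elements of $\mathcal{B}$; an ordering is a bijection $\tau:\mathcal{B}\to\{1,\dots,|\mathcal{B}|\}$; and $\mathrm{BCB}^k_\tau(\mathcal{B})$ is the set of $S=(H_1,\dots,H_k)\in\mathrm{Or}^k(\mathcal{B})$ with $\tau(H_1)<\dots<\tau(H_k)$ such that for every $G\in\mathcal{B}$ not among the $H_i$, the set $\{G\}\cup\{H_i:\tau(H_i)>\tau(G)\}$ is independent. By convention $\mathrm{BCB}^0$ consists of the empty tuple. Given $H\in\mathcal{A}$: $\mathcal{A}\setminus\{H\}$ is the deleted arrangement in $V_{\mathbb{C}}$; $\mathcal{A}|H=\{H'\cap H: H'\in\mathcal{A}\setminus\{H\}\}$ is the arrangement of hyperplanes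 in $H$ (as a set of distinct subspaces); $\pi:\mathcal{A}\setminus\{H\}\to\mathcal{A}|H$, $H'\mapsto H'\cap H$. An ordering $\sigma$ of $\mathcal{A}$ is compatible with $H$ if (1) $\sigma(H)=|\mathcal{A}|$ and (2) whenever $H_1\cap H=H_3\cap H$ and $\sigma(H_1)<\sigma(H_2)<\sigma(H_3)$, then $H_1\cap H=H_2\cap H$. Then $\sigma\setminus H$ is the restriction of the order $\sigma$ to $\mathcal{A}\setminus\{H\}$, $\sigma|H$ is the induced ordering of $\mathcal{A}|H$ (well defined because by (2) each fiber of $\pi$ is an interval for $\sigma$; $K<K'$ iff the fiber over $K$ precedes the fiber over $K'$), and $l_\sigma:\mathcal{A}|H\to\mathcal{A}\setminus\{H\}$ sends $K$ to the element $H''$ with $\pi(H'')=K$ having the least $\sigma$-value. *)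

(* Defs.v *)
From HB Require Import structures.
From mathcomp Require Import all_boot all_order all_algebra.
From mathcomp Require Import complex.
From mathcomp Require Import reals.
Set Implicit Arguments. Unset Strict Implicit. Unset Printing Implicit Defensive.
Import Order.TTheory GRing.Theory Num.Theory.
Local Open Scope ring_scope.

Section Arrangements.
Variable (F : fieldType) (V : vectType F).

Definition hyperplane_in (W K : {vspace V}) : bool :=
  [&& (K <= W)%VS, (0 < \dim W)%N & \dim K == (\dim W).-1].

Definition arrangement_in (W : {vspace V}) (B : seq {vspace V}) : Prop :=
  uniq B /\ all (hyperplane_in W) B.

(* f is a linear form on W defining K : its kernel (inside W) is K.  Linear
   forms on W are represented as (restrictions to W of) linear functionals on V. *)
Definition defining_form (W K : {vspace V}) (f : 'Hom(V, F^o)) : Prop :=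
  forall v, v \in W -> (f v == 0) = (v \in K).

Definition independent_in (W : {vspace V}) (S : seq {vspace V}) : Prop :=
  forall fs : seq 'Hom(V, F^o), size fs = size S ->
    (forall i, (i < size S)%N -> defining_form W (nth 0%VS S i) (nth 0 fs i)) ->
    forall c : seq F, size c = size S ->
      (forall v, v \in W -> \sum_(i < size S) c`_i * (nth 0 fs i v : F) = 0) ->
      forall i, (i < size S)%N -> c`_i = 0.

Definition ordering_of (B : seq {vspace V}) (tau : {vspace V} -> nat) : Prop :=
  {in B &, injective tau} /\ forall G, G \in B -> (1 <= tau G <= size B)%N.

Definition Or (W : {vspace V}) (B : seq {vspace V}) (k : nat) (S : seq {vspace V})
  : Prop := [/\ size S = k, all (mem B) S & independent_in W S].

Definition BCB (W : {vspace V}) (B : seq {vspace V}) (tau : {vspace V} -> nat)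
  (k : nat) (S : seq {vspace V}) : Prop :=
  if k == 0%N then S = [::] else
  [/\ Or W B k S,
      sorted (fun x y => (tau x < tau y)%N) S &
      forall G, G \in B -> G \notin S ->
        independent_in W (G :: [seq Hi <- S | (tau G < tau Hi)%N])].

Definition deletion (A : seq {vspace V}) (H : {vspace V}) : seq {vspace V} :=
  [seq H' <- A | H' != H].

Definition restriction (A : seq {vspace V}) (H : {vspace V}) : seq {vspace V} :=
  undup [seq (H' :&: H)%VS | H' <- deletion A H].

Definition compatible (A : seq {vspace V}) (H : {vspace V})
  (sigma : {vspace V} -> nat) : Prop :=
  sigma H = size A /\
  forall H1 H2 H3, H1 \in A -> H2 \in A -> H3 \in A ->
    (H1 :&: H)%VS = (H3 :&: H)%VS ->
    (sigma H1 < sigma H2 < sigma H3)%N ->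
    (H1 :&: H)%VS = (H2 :&: H)%VS.

(* sigma \ H : the restriction of sigma to A \ {H} (same function). *)
Definition sigma_del (sigma : {vspace V} -> nat) : {vspace V} -> nat := sigma.

Definition l_sigma (A : seq {vspace V}) (H : {vspace V})
  (sigma : {vspace V} -> nat) (K : {vspace V}) : {vspace V} :=
  head K (sort (fun x y => (sigma x <= sigma y)%N)
               [seq H' <- deletion A H | (H' :&: H)%VS == K]).

(* sigma|H : the induced ordering of A|H; the fibre over K precedes the fibre over
   K' iff its least element (l_sigma) precedes, so sigma|H(K) is the rank of K. *)
Definition sigma_res (A : seq {vspace V}) (H : {vspace V})
  (sigma : {vspace V} -> nat) (K : {vspace V}) : nat :=
  count (fun K' => (sigma (l_sigma A H sigma K') <= sigma (l_sigma A H sigma K))%N)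
        (restriction A H).

End Arrangements.

(* Main.v *)
Require Import Defs.
From HB Require Import structures.
From mathcomp Require Import all_boot all_order all_algebra.
From mathcomp Require Import complex.
From mathcomp Require Import reals.
From Stdlib Require Import Classical.
From mathcomp Require Import zify ring.
Set Implicit Arguments. Unset Strict Implicit. Unset Printing Implicit Defensive.
Import Order.TTheory GRing.Theory Num.Theory.

Section LA.
Variable (F : fieldType) (V : vectType F).
Implicit Types (W K U : {vspace V}) (s : seq {vspace V}).

Lemma cut W K U : hyperplane_in W K -> (U <= W)%VS -> ~~ (U <= K)%VS ->
  (\dim (U :&: K)).+1 = \dim U.
Proof.
case/and3P=> sKW dW /eqP dK sUW nUK.
have e := dimv_sum_cap U K.
have sUKW : (U + K <= W)%VS by rewrite subv_add sUW sKW.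
have h1 := dimvS sUKW.
have h2 : (\dim K < \dim (U + K))%N.
  rewrite ltn_neqAle; case: (dimv_leqif_sup (addvSr U K)) => -> ->.
  by rewrite subv_add negb_and nUK.
have : \dim (U + K) = \dim W by rewrite dK in h2; apply/eqP; rewrite eqn_leq h1 /=; case: (\dim W) dW h2 => //.
move=> eW; rewrite eW dK in e; case: (\dim W) dW e => // n _; rewrite /=; lia.
Qed.

Lemma cut_le W K U : hyperplane_in W K -> (U <= W)%VS ->
  (\dim U <= (\dim (U :&: K)).+1)%N.
Proof.
move=> hK sUW; case: (boolP (U <= K)%VS) => [/capv_idPl -> //|nUK].
by rewrite (cut hK sUW nUK).
Qed.

Definition D W s := (W :&: \bigcap_(K <- s) K)%VS.

Lemma D_cons W K s : D W (K :: s) = (D W s :&: K)%VS.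
Proof. by rewrite /D big_cons capvA [(W :&: K)%VS]capvC -capvA capvC. Qed.

Lemma D_nil W : D W [::] = W.
Proof. by rewrite /D big_nil capvf. Qed.

Lemma D_perm W s t : perm_eq s t -> D W s = D W t.
Proof. by move=> p; rewrite /D (perm_big _ p). Qed.

Lemma D_sub W s : (D W s <= W)%VS.
Proof. exact: capvSl. Qed.

Lemma memD W s v : (v \in D W s) = (v \in W) && all (fun K => v \in K) s.
Proof.
elim: s => [|K s IH]; first by rewrite D_nil andbT.
by rewrite D_cons memv_cap IH /= andbA andbAC.
Qed.

Lemma cutN W s U : (U <= W)%VS -> all (hyperplane_in W) s ->
  (\dim U <= \dim (U :&: \bigcap_(K <- s) K) + size s)%N.
Proof.
elim: s U => [|K s IH] U sUW /=; first by rewrite big_nil capvf addn0.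
case/andP=> hK hs; rewrite big_cons capvA.
have := cut_le hK sUW; have := IH (U :&: K)%VS (subv_trans (capvSl _ _) sUW) hs.
lia.
Qed.

Lemma D_lb W s : all (hyperplane_in W) s -> (\dim W <= \dim (D W s) + size s)%N.
Proof. exact: cutN. Qed.


Lemma exists_form W K : hyperplane_in W K ->
  exists f : 'Hom(V, F^o), defining_form W K f.
Proof.
move=> hK; have /and3P[sKW dW /eqP dK] := hK.
have nWK : ~~ (W <= K)%VS.
  apply/negP=> /dimvS; rewrite dK; case: (\dim W) dW => //= n _; lia.
have [w Ww nKw] := subvPn nWK.
have w0 : w != 0%R by apply: contraNneq nKw => ->; apply: mem0v.
have Kw0 : (K :&: <[w]> = 0)%VS.
  apply/eqP; rewrite -subv0; apply/subvP => x /memv_capP[Kx /vlineP[a ea]].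
  rewrite memv0; apply/eqP; move: Kx; rewrite ea.
  have [->|a0] := eqVneq a 0%R; first by rewrite scale0r.
  by move/(memvZ a^-1); rewrite scalerA mulVf // scale1r (negPf nKw).
have wK0 : (<[w]> :&: K = 0)%VS by rewrite capvC.
have sWKw : (W <= K + <[w]>)%VS.
  have s1 : (K + <[w]> <= W)%VS by rewrite subv_add sKW -memvE.
  have := dimv_sum_cap K <[w]>; rewrite Kw0 dimv0 dim_vline w0 dK addn0.
  move=> e; have : \dim (K + <[w]>) = \dim W by case: (\dim W) dW e => //= n _; lia.
  move=> e2; have [_] := dimv_leqif_sup s1; rewrite e2 eqxx.
  by move/esym.
pose P := daddv_pi <[w]> K.
pose f : 'Hom(V, F^o) := (linfun (coord [tuple w] ord0 : V -> F^o) \o P)%VF.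
exists f => v Wv.
have vKw : v \in (<[w]> + K)%VS by rewrite addvC; apply: (subvP sWKw).
have eadd := daddv_pi_add wK0 vKw.
have [a ea] := vlineP _ _ (memv_pi <[w]> K v).
have -> : (f v == 0%R) = (P v == 0%R).
  rewrite /f comp_lfunE lfunE /= -/P ea linearZ /=.
  have := coord_free (ord0 : 'I_1) (ord0 : 'I_1) (_ : free [tuple w]).
  rewrite seq1_free w0 /= => /(_ isT) ->.
  by rewrite mulr1 scaler_eq0 (negPf w0) orbF.
apply/eqP/idP => [P0|Kv].
  by rewrite -eadd P0 add0r memv_pi.
have := daddv_pi_id Kw0 Kv; rewrite -{2}eadd => e.
have := addrK (daddv_pi K <[w]> v) (daddv_pi <[w]> K v); rewrite -e subrr => <-; by []. 
Qed.


Local Open Scope ring_scope.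

Lemma hom_lin (f : 'Hom(V, F^o)) (v w : V) (t : F) :
  (f (v - t *: w) : F) = f v - t * f w.
Proof. by rewrite linearB linearZ. Qed.

Lemma sum_lin (gs : seq 'Hom(V, F^o)) (c : seq F) (v w : V) (t : F) :
  \sum_(i < size gs) c`_i * (gs`_i (v - t *: w) : F) =
  \sum_(i < size gs) c`_i * (gs`_i v : F) - t * \sum_(i < size gs) c`_i * (gs`_i w : F).
Proof.
rewrite mulr_sumr -sumrB; apply: eq_bigr => i _.
by rewrite hom_lin mulrBr mulrCA.
Qed.

Lemma dual (gs : seq 'Hom(V, F^o)) : forall (W : {vspace V}) (f : 'Hom(V, F^o)),
  (forall v, v \in W -> all (fun g : 'Hom(V, F^o) => g v == 0) gs -> f v = 0) ->
  exists c : seq F, size c = size gs /\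
    forall v, v \in W -> (f v : F) = \sum_(i < size gs) c`_i * (gs`_i v : F).
Proof.
elim: gs => [|g gs IH] W f h.
  by exists [::]; split => // v Wv; rewrite big_ord0; apply: h.
have [c' [sc' ec']] : exists c : seq F, size c = size gs /\
    forall v, v \in (W :&: lker g)%VS -> (f v : F) = \sum_(i < size gs) c`_i * (gs`_i v : F).
  apply: IH => v /memv_capP[Wv]; rewrite memv_ker => g0 hall.
  by apply: h => //=; rewrite g0.
pose s v := \sum_(i < size gs) c'`_i * (gs`_i v : F).
case: (classic (exists w, w \in W /\ g w != 0)) => [[w [Ww gw0]]|nw].
  exists (((f w : F) - s w) / (g w : F) :: c'); split; first by rewrite /= sc'.
  move=> v Wv; rewrite big_ord_recl /=.
  pose t := (g v : F) / (g w : F).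
  have Wu : v - t *: w \in (W :&: lker g)%VS.
    rewrite memv_cap memvB ?memvZ //= memv_ker hom_lin /t.
    by rewrite -mulrA mulVf // mulr1 subrr.
  have := ec' _ Wu; rewrite hom_lin sum_lin -/(s v) -/(s w) => e.
  have e2 : (f v : F) - s v = t * ((f w : F) - s w).
    apply/eqP; rewrite -subr_eq0.
    have -> : (f v : F) - s v - t * ((f w : F) - s w) = ((f v : F) - t * f w) - (s v - t * s w) by ring.
    by rewrite e subrr.
  apply/eqP; rewrite -subr_eq e2 /t; apply/eqP.
  rewrite /=; ring.
exists (0 :: c'); split; first by rewrite /= sc'.
move=> v Wv; rewrite big_ord_recl /= mul0r add0r; apply: ec'.
rewrite memv_cap Wv memv_ker /=; apply/eqP; apply: NNPP => gv.
by apply: nw; exists v; split => //; apply/eqP.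
Qed.


Definition defs W s (fs : seq 'Hom(V, F^o)) :=
  size fs = size s /\
  forall i, (i < size s)%N -> defining_form W (nth 0%VS s i) (nth 0 fs i).

Definition findep W (fs : seq 'Hom(V, F^o)) :=
  forall c : seq F, size c = size fs ->
      (forall v, v \in W -> \sum_(i < size fs) c`_i * (nth 0 fs i v : F) = 0) ->
      forall i, (i < size fs)%N -> c`_i = 0.

Lemma defs_cons W K s f fs : defs W (K :: s) (f :: fs) ->
  defining_form W K f /\ defs W s fs.
Proof.
case=> [[e] h]; split; first exact: (h 0%N).
by split=> // i lti; apply: (h i.+1).
Qed.

Lemma exists_forms W s : all (hyperplane_in W) s -> exists fs, defs W s fs.
Proof.
elim: s => [|K s IH] /=; first by exists [::]; split => // i.
case/andP=> /exists_form[f hf] /IH[fs [e h]].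
exists (f :: fs); split; first by rewrite /= e.
by case=> [|i] //= lti; apply: h.
Qed.

Lemma findep_tail W f fs : findep W (f :: fs) -> findep W fs.
Proof.
move=> h c sc hc i lti.
have := h (0 :: c) _ _ i.+1; apply => //=; first by rewrite sc.
by move=> v Wv; rewrite big_ord_recl /= mul0r add0r; apply: hc.
Qed.

Lemma defs_D W s fs v : defs W s fs -> v \in W ->
  all (fun g : 'Hom(V, F^o) => g v == 0) fs -> v \in D W s.
Proof.
case=> [e h] Wv /all_nthP hall; rewrite memD Wv /=.
apply/(all_nthP 0%VS) => i lti; rewrite -(h i lti v Wv); apply: hall.
by rewrite e.
Qed.

Lemma lemA W s fs : all (hyperplane_in W) s -> defs W s fs -> findep W fs ->
  (\dim (D W s) + size s = \dim W)%N.
Proof.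
elim: s fs => [|K s IH] [|f fs] //; first by rewrite D_nil addn0.
- by move=> _ [e]; discriminate e.
- by move=> _ [e]; discriminate e.
move=> /= /andP[hK hs] /defs_cons[dK ds] hf.
have IH' := IH _ hs ds (findep_tail hf).
have nDK : ~~ (D W s <= K)%VS.
  apply/negP => sDK.
  have hd : forall v, v \in W -> all (fun g : 'Hom(V, F^o) => g v == 0) fs -> f v = 0.
    move=> v Wv hall; apply/eqP; rewrite dK //; apply: (subvP sDK); exact: defs_D ds Wv hall.
  have [c [sc ec]] := dual hd.
  have : (-1 :: c)`_0 = 0 :> F.
    apply: hf => //=; first by rewrite sc.
    move=> v Wv; rewrite big_ord_recl /= (ec v Wv) mulN1r; by rewrite addNr.
  by move=> /= /eqP; rewrite oppr_eq0 oner_eq0.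
rewrite D_cons /=; have := cut hK (D_sub W s) nDK; lia.
Qed.

Lemma lemB W s fs : all (hyperplane_in W) s -> defs W s fs ->
  (\dim (D W s) + size s = \dim W)%N -> findep W fs.
Proof.
elim: s fs => [|K s IH] [|f fs] //.
- by move=> _ [e]; discriminate e.
move=> /= /andP[hK hs] /defs_cons[dK ds] e.
have lb := D_lb hs; have cl := cut_le hK (D_sub W s).
rewrite D_cons in e.
have e' : (\dim (D W s) + size s = \dim W)%N by lia.
have nDK : ~~ (D W s <= K)%VS.
  by apply/negP => /capv_idPl ee; rewrite ee in e; lia.
have IH' := IH _ hs ds e'.
have [v Dv nKv] := subvPn nDK.
have Wv : v \in W := subvP (D_sub W s) v Dv.
move=> [|c0 c] //= [sc] hc.
have c00 : c0 = 0.
  have := hc v Wv; rewrite big_ord_recl /=.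
  have -> : \sum_(i < size fs) c`_i * (fs`_i v : F) = 0.
    apply: big1 => i _; case: ds => [efs hds].
    have lti : (i < size s)%N by rewrite -efs.
    have vi : v \in nth 0%VS s i.
      by move: Dv; rewrite memD => /andP[_ /(all_nthP 0%VS)]; apply.
    by have := hds i lti v Wv; rewrite vi => /eqP ->; rewrite mulr0.
  rewrite addr0 => /eqP; rewrite mulf_eq0 => /orP[/eqP //|].
  by rewrite (dK v Wv) (negPf nKv).
have c0' : forall i, (i < size fs)%N -> c`_i = 0.
  apply: IH' => // v' Wv'; have := hc v' Wv'.
  by rewrite big_ord_recl /= c00 mul0r add0r.
by case=> [|i] //= lti; apply: c0'.
Qed.


Lemma ind_dim W s : all (hyperplane_in W) s ->
  independent_in W s <-> (\dim (D W s) + size s = \dim W)%N.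
Proof.
move=> hs; split.
  have [fs dfs] := exists_forms hs => hind.
  apply: (lemA hs dfs); case: (dfs) => efs hds c sc hc i lti.
  by apply: (hind fs efs hds c) => //; rewrite ?sc ?efs // -efs.
move=> e fs efs hds c sc hc i lti.
have fi := lemB hs (conj efs hds) e.
by apply: fi; rewrite ?efs //.
Qed.


Local Close Scope ring_scope.

Lemma all_hyp_sub W s t : all (hyperplane_in W) t -> {subset s <= t} ->
  all (hyperplane_in W) s.
Proof. by move=> /allP h sst; apply/allP => x /sst /h. Qed.

Lemma ind_perm W s t : all (hyperplane_in W) s -> perm_eq s t ->
  independent_in W s -> independent_in W t.
Proof.
move=> hs p; have ht : all (hyperplane_in W) t by rewrite -(perm_all _ p).
by rewrite (ind_dim hs) (ind_dim ht) (D_perm W p) (perm_size p).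
Qed.

Lemma ind_tail W K s : all (hyperplane_in W) (K :: s) ->
  independent_in W (K :: s) -> independent_in W s.
Proof.
move=> /= /andP[hK hs]; rewrite (ind_dim hs) ind_dim /= ?hK ?hs // D_cons.
have := D_lb hs; have := cut_le hK (D_sub W s).
move: (\dim (D W s)) (\dim (D W s :&: K)) (size s) => x y z; lia.
Qed.

Lemma dep W s X : all (hyperplane_in W) s -> X \in s ->
  (D W (rem X s) <= X)%VS -> ~ independent_in W s.
Proof.
move=> hs Xs sub; have p := perm_to_rem Xs.
have hr : all (hyperplane_in W) (rem X s) by apply: all_hyp_sub hs _; apply: mem_rem.
rewrite (ind_dim hs) (D_perm W p) (perm_size p) D_cons /=.
move/capv_idPl: sub => ->; have := D_lb hr.
move: (\dim (D W (rem X s))) (size (rem X s)) => x y; lia.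
Qed.

Lemma ind_uniq W s : all (hyperplane_in W) s -> independent_in W s -> uniq s.
Proof.
elim: s => [|K s IH] //= hs0 i; have /andP[hK hs] := hs0.
rewrite (IH hs (ind_tail hs0 i)) andbT; apply/negP => Ks.
apply: (@dep W (K :: s) K hs0 _ _ i); first by rewrite mem_head.
rewrite /= eqxx; apply/subvP => v; rewrite memD => /andP[_ /allP]; exact.
Qed.

Lemma D_cat W s t : D W (s ++ t) = (D W s :&: \bigcap_(K <- t) K)%VS.
Proof. by rewrite /D big_cat capvA. Qed.

Lemma ind_sub W s t : all (hyperplane_in W) t -> independent_in W t ->
  uniq s -> {subset s <= t} -> independent_in W s.
Proof.
move=> ht it us sst; have hs := all_hyp_sub ht sst.
have ut : uniq t := ind_uniq ht it.
pose r : seq {vspace V} := filter (predC (mem s)) t.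
have p1 : perm_eq (filter (mem s) t) s.
  apply: uniq_perm; rewrite ?filter_uniq // => x.
  by rewrite mem_filter /=; case xs: (x \in s); rewrite ?(sst x xs).
have p : perm_eq t (s ++ r).
  apply: (@perm_trans _ (filter (mem s) t ++ r)); last by rewrite perm_cat2r.
  by rewrite perm_sym /r (perm_filterC (mem s) t).
have hr : all (hyperplane_in W) r by apply: all_hyp_sub ht _; apply: mem_subseq; apply: filter_subseq.
move: it; rewrite (ind_dim ht) (ind_dim hs) (D_perm W p) (perm_size p) D_cat size_cat.
have := cutN (D_sub W s) hr; have := D_lb hs; set a := size r; set b := size s; set x := \dim (D W s); set y := \dim (_ :&: _). clearbody a b x y; move=> h1 h2 h3; lia.
Qed.


Lemma ind_single W K : hyperplane_in W K -> independent_in W [:: K].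
Proof.
move=> hK; have /and3P[sKW dW /eqP dK] := hK.
rewrite ind_dim /= ?hK // D_cons D_nil; move/capv_idPr: sKW => ->.
rewrite dK; move: (\dim W) dW => n; lia.
Qed.

Lemma hyp_nsub (X H : {vspace V}) : hyperplane_in fullv X -> hyperplane_in fullv H -> X != H ->
  ~~ (H <= X)%VS.
Proof.
move=> /and3P[_ _ /eqP dX] /and3P[_ _ /eqP dH] nXH; apply/negP => sHX.
have [_] := dimv_leqif_eq sHX; rewrite dX dH eqxx => /esym/eqP eHX.
by rewrite eHX eqxx in nXH.
Qed.

Lemma restr_hyp (X H : {vspace V}) : hyperplane_in fullv X -> ~~ (H <= X)%VS ->
  hyperplane_in H (X :&: H)%VS.
Proof.
move=> hX nHX; have e := cut hX (subvf H) nHX.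
rewrite /hyperplane_in capvSr capvC -e /=; lia.
Qed.

Lemma ind_restr (H : {vspace V}) (L : seq {vspace V}) : hyperplane_in fullv H -> all (hyperplane_in fullv) L ->
  (forall X, X \in L -> ~~ (H <= X)%VS) ->
  independent_in H (map (fun X => X :&: H)%VS L) <-> independent_in fullv (H :: L).
Proof.
move=> hH hL nL.
have hm : all (hyperplane_in H) (map (fun X => X :&: H)%VS L).
  rewrite all_map; apply/allP => X XL /=; apply: restr_hyp (nL X XL).
  exact: (allP hL).
rewrite (ind_dim hm) (ind_dim (W := fullv)) /= ?hH ?hL // size_map.
have -> : D H (map (fun X => X :&: H)%VS L) = D fullv (H :: L).
  apply/vspaceP => v; rewrite !memD memvf /= all_map.
  case vH: (v \in H) => //=; apply: eq_all => X /=.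
  by rewrite memv_cap vH andbT.
have /and3P[_ dV /eqP dH] := hH; rewrite dH.
move: (\dim (D fullv (H :: L))) (size L) (\dim (fullv : {vspace V})) dV => x y z dV.
split; lia.
Qed.


Lemma dep3 W s (X Y Z : {vspace V}) : all (hyperplane_in W) s -> independent_in W s ->
  X \in s -> Y \in s -> Z \in s -> Y != X -> Z != X -> (Y :&: Z <= X)%VS -> False.
Proof.
move=> hs i Xs Ys Zs nYX nZX sYZ; have us := ind_uniq hs i.
apply: (dep hs Xs _ i); apply/subvP => v; rewrite memD => /andP[_ /allP hv].
apply: (subvP sYZ); rewrite memv_cap !hv // mem_rem_uniq //= inE ?nYX ?nZX ?Ys ?Zs //.
Qed.

End LA.


Section Main.
Variable (F : fieldType) (V : vectType F).
Variables (A : seq {vspace V}) (H : {vspace V}) (sigma : {vspace V} -> nat).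
Hypotheses (hA : arrangement_in fullv A) (HA : H \in A)
  (ord : ordering_of A sigma) (sH : sigma H = size A).

Local Notation del := (deletion A H).
Local Notation res := (restriction A H).
Local Notation l := (l_sigma A H sigma).
Local Notation sres := (sigma_res A H sigma).

Lemma hypA X : X \in A -> hyperplane_in fullv X.
Proof. by case: hA => _ /allP; apply. Qed.

Lemma hypH : hyperplane_in fullv H.
Proof. exact: hypA. Qed.

Lemma mem_del X : (X \in del) = (X != H) && (X \in A).
Proof. by rewrite mem_filter. Qed.

Lemma del_A X : X \in del -> X \in A.
Proof. by rewrite mem_del => /andP[]. Qed.

Lemma del_neq X : X \in del -> X != H.
Proof. by rewrite mem_del => /andP[]. Qed.

Lemma sig_le X : X \in A -> sigma X <= sigma H.
Proof. by case: ord => _ h /h /andP[_]; rewrite sH. Qed.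

Lemma sig_inj X Y : X \in A -> Y \in A -> sigma X = sigma Y -> X = Y.
Proof. by case: ord => inj _ XA YA; apply: inj. Qed.

Lemma sig_lt X : X \in A -> X != H -> sigma X < sigma H.
Proof.
move=> XA nXH; rewrite ltn_neqAle sig_le // andbT.
by apply: contra nXH => /eqP /(sig_inj XA HA) ->.
Qed.

Lemma del_nsub X : X \in del -> ~~ (H <= X)%VS.
Proof.
move=> Xd; apply: hyp_nsub; [exact: hypA (del_A Xd)| exact: hypH | exact: del_neq].
Qed.

Lemma mem_res K : K \in res -> exists2 X, X \in del & K = (X :&: H)%VS.
Proof. by rewrite mem_undup => /mapP. Qed.

Lemma res_mem X : X \in del -> (X :&: H)%VS \in res.
Proof. by move=> Xd; rewrite mem_undup; apply: map_f. Qed.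

Lemma res_hyp K : K \in res -> hyperplane_in H K.
Proof.
case/mem_res => X Xd ->; apply: restr_hyp; [exact: hypA (del_A Xd)|exact: del_nsub].
Qed.

Lemma l_prop X : X \in del ->
  [/\ l (X :&: H)%VS \in del, (l (X :&: H)%VS :&: H)%VS = (X :&: H)%VS
    & sigma (l (X :&: H)%VS) <= sigma X].
Proof.
move=> Xd; rewrite /l_sigma.
set s := [seq H' <- del | (H' :&: H)%VS == (X :&: H)%VS].
have Xs : X \in s by rewrite mem_filter eqxx Xd.
have srt := sort_sorted (fun x y : {vspace V} => leq_total (sigma x) (sigma y)) s.
have ms := mem_sort (fun x y : {vspace V} => sigma x <= sigma y) s.
case es : (sort _ s) srt ms => [|h t] srt ms.
  by have := ms X; rewrite Xs.
have hs : h \in s by rewrite -ms mem_head.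
move: hs; rewrite mem_filter => /andP[/eqP eh hd] /=; split => //.
have : X \in h :: t by rewrite ms.
rewrite inE => /orP[/eqP -> //|Xt].
have := order_path_min (fun y x z => @leq_trans (sigma y) (sigma x) (sigma z)) srt.
by move/allP/(_ X Xt).
Qed.

Lemma l_res K : K \in res -> [/\ l K \in del, (l K :&: H)%VS = K
    & forall X, X \in del -> (X :&: H)%VS = K -> sigma (l K) <= sigma X].
Proof.
case/mem_res => X Xd ->; have [h1 h2 h3] := l_prop Xd; split => // Y Yd eY.
by have [_ _] := l_prop Yd; rewrite eY.
Qed.

Lemma count_lt (T : eqType) (P1 P2 : pred T) (s : seq T) x :
  (forall y, P1 y -> P2 y) -> x \in s -> P2 x -> ~~ P1 x ->
  count P1 s < count P2 s.
Proof.
move=> sub; elim: s => [|y s IH] //=; rewrite inE => /orP[/eqP <-|xs] P2x nP1x.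
  rewrite P2x (negPf nP1x) add0n add1n ltnS; exact: sub_count.
have := IH xs P2x nP1x; case P1y: (P1 y); first by rewrite (sub _ P1y); lia.
by case: (P2 y); lia.
Qed.

Lemma res_lt K1 K2 : K2 \in res ->
  (sres K1 < sres K2) = (sigma (l K1) < sigma (l K2)).
Proof.
move=> K2r; rewrite /sigma_res; apply/idP/idP => h.
  rewrite ltnNge; apply/negP => le21; move: h; apply/negP; rewrite -leqNgt.
  apply: sub_count => K /= hK; exact: leq_trans hK le21.
apply: (count_lt (x := K2)) => //=; last by rewrite -ltnNge.
by move=> y /= hy; apply: leq_trans hy (ltnW h).
Qed.


Lemma hypS s : all (mem A) s -> all (hyperplane_in fullv) s.
Proof. by move=> /allP h; apply/allP => x /h /hypA. Qed.

Lemma ltrans : transitive (fun x y : {vspace V} => sigma x < sigma y).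
Proof. by move=> y x z; apply: ltn_trans. Qed.

Lemma dir1_noH k S : 0 < k -> BCB fullv A sigma k S -> H \notin S ->
  BCB fullv del (sigma_del sigma) k S.
Proof.
case: k => // k _; rewrite /BCB /= => -[[sz allA iS] srt cond] HS.
split => //.
  split => //; apply/allP => x xS; have xA : x \in A := allP allA x xS.
  rewrite /= mem_del xA andbT.
  by apply: contraNneq HS => <-.
by move=> G /del_A; apply: cond.
Qed.

Lemma dir2_del k S : 0 < k -> BCB fullv del (sigma_del sigma) k S ->
  BCB fullv A sigma k S.
Proof.
case: k => // k _; rewrite /BCB /= => -[[sz alld iS] srt cond].
have allA : all (mem A) S by apply/allP => x /(allP alld) /del_A.
split => // G GA GS; case: (eqVneq G H) => [->|nGH]; last first.
  by apply: cond => //; rewrite mem_del nGH.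
rewrite (eq_in_filter (a2 := pred0)) ?filter_pred0; first exact: ind_single hypH.
by move=> x /(allP allA) xA /=; rewrite ltnNge sig_le.
Qed.


Lemma sorted_rconsP s x : sorted (fun a b => sigma a < sigma b) (rcons s x) =
  all (fun y => sigma y < sigma x) s && sorted (fun a b => sigma a < sigma b) s.
Proof. by rewrite !(sorted_pairwise ltrans) pairwise_rcons. Qed.

Lemma dir1_H k S : 0 < k -> BCB fullv A sigma k S -> H \in S ->
  exists2 T, BCB H res sres k.-1 T & S = rcons (map l T) H.
Proof.
case: k => // k _; rewrite /BCB /= => -[[sz allA iS] srt cond].
move: sz allA iS srt cond; case/lastP: S => [|S' x] //= sz allA iS srt cond HS.
move: srt; rewrite sorted_rconsP => /andP[/allP ltx srt'].
have inA : {subset rcons S' x <= A} by apply/allP.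
have xA : x \in A by apply: inA; rewrite mem_rcons mem_head.
have exH : x = H.
  apply/eqP; apply: contraT => nxH.
  have : H \in S' by move: HS; rewrite mem_rcons inE eq_sym (negPf nxH).
  by move/ltx; rewrite ltnNge sig_le.
subst x.
have HS' : H \notin S' by apply/negP => /ltx; rewrite ltnn.
have S'd : forall X, X \in S' -> X \in del.
  move=> X XS; rewrite mem_del inA ?mem_rcons ?inE ?XS ?orbT // andbT.
  by apply: contraNneq HS' => <-.
have hS := hypS allA.
have C1 : forall X, X \in S' -> l (X :&: H)%VS = X.
  move=> X XS; have Xd := S'd X XS; have [Gd eG leG] := l_prop Xd.
  set G := l (X :&: H)%VS in Gd eG leG *.
  apply/eqP; apply: contraT => nGX; exfalso.
  have GA := del_A Gd; have nGH := del_neq Gd.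
  have XSr : X \in rcons S' H by rewrite mem_rcons inE XS orbT.
  case: (boolP (G \in rcons S' H)) => GS.
    apply: (dep3 (Z := H) hS iS XSr GS _ nGX) => //.
    - by rewrite eq_sym del_neq.
    - by rewrite eG capvSl.
  have := cond G GA GS.
  have ltGX : sigma G < sigma X.
    rewrite ltn_neqAle leG andbT; apply: contra nGX => /eqP e.
    by apply/eqP; apply: sig_inj => //; apply: del_A.
  set s := G :: _; have hs : all (hyperplane_in fullv) s.
    rewrite /= hypA //=; apply: all_hyp_sub hS _ => y; rewrite mem_filter => /andP[].
    by [].
  move=> iG; apply: (dep3 (Y := X) (Z := H) hs iG (mem_head _ _)).
  - by rewrite inE mem_filter ltGX XSr orbT.
  - by rewrite inE mem_filter sig_lt // mem_rcons mem_head orbT.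
  - by rewrite eq_sym.
  - by rewrite eq_sym.
  - by rewrite -eG capvSl.
exists (map (fun X => X :&: H)%VS S'); last first.
  by congr rcons; rewrite -map_comp map_id_in // => X XS /=; rewrite C1.
rewrite size_rcons in sz; case: sz => sz.
case: k sz => [|k] sz /=.
  by move: sz; case: (S').
have iT : independent_in H [seq (X :&: H)%VS | X <- S'].
  apply/ind_restr; first exact: hypH.
  - by apply: all_hyp_sub hS _ => y yS; rewrite mem_rcons inE yS orbT.
  - by move=> X /S'd /del_nsub.
  - by apply: ind_perm iS; [exact: hS | rewrite perm_rcons].
split.
- split => //; first by rewrite size_map.
  by rewrite all_map; apply/allP => X /S'd /res_mem.
- rewrite sorted_map; apply: (sub_in_sorted (P := mem S')) srt'; last by apply/allP.
  move=> X Y XS YS /= lt; rewrite res_lt ?C1 //.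
  exact: res_mem (S'd Y YS).
move=> K Kr KT; have [Gd eG _] := l_res Kr; set G := l K in Gd eG *.
have GS : G \notin rcons S' H.
  rewrite mem_rcons inE negb_or del_neq //=; apply: contra KT => GS'.
  by rewrite -eG; apply: map_f.
have := cond G (del_A Gd) GS; rewrite filter_rcons sig_lt ?del_A ?del_neq //.
rewrite filter_map.
set F' := filter (fun H' => sigma G < sigma H') S'.
have -> : [seq x <- S' | preim (fun X => (X :&: H)%VS) (fun K' => sres K < sres K') x] = F'.
  apply: eq_in_filter => X XS /=; rewrite res_lt ?C1 //; exact: res_mem (S'd X XS).
move=> iG.
have F'd : forall X, X \in F' -> X \in del by move=> X; rewrite mem_filter => /andP[_ /S'd].
rewrite -eG -[_ :: _]/(map (fun X => (X :&: H)%VS) (G :: F')).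
apply/ind_restr; first exact: hypH.
- by rewrite /= hypA ?del_A //=; apply/allP => X /F'd /del_A /hypA.
- by move=> X; rewrite inE => /orP[/eqP ->|/F'd]; apply: del_nsub.
apply: ind_perm iG.
  rewrite /= hypA ?del_A //=; apply/allP => X; rewrite mem_rcons inE => /orP[/eqP ->|/F'd /del_A /hypA] //.
  exact: hypH.
by rewrite -rcons_cons perm_rcons.
Qed.


Lemma dir2_res k T : 0 < k -> BCB H res sres k.-1 T ->
  BCB fullv A sigma k (rcons (map l T) H).
Proof.
case: k => // k _ /= hT0.
have [szT subT iT srtT condT] : [/\ size T = k, {subset T <= res}, independent_in H T,
    sorted (fun a b => sres a < sres b) T &
    forall K, K \in res -> K \notin T ->
      independent_in H (K :: [seq K' <- T | sres K < sres K'])].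
  move: hT0; case: k => [|k] /=; rewrite /BCB /=.
    move=> ->; split => //.
    by move=> K Kr _; apply: ind_single; apply: res_hyp.
  by case=> -[sz /allP sub iT] srt cond; split.
have hT : all (hyperplane_in H) T by apply/allP => K /subT /res_hyp.
have lT : forall K, K \in T -> l K \in del /\ (l K :&: H)%VS = K.
  by move=> K /subT /l_res [? ? _].
set S' := map l T.
have S'd : forall X, X \in S' -> X \in del by move=> X /mapP[K KT ->]; case: (lT K KT).
have mS' : map (fun X => (X :&: H)%VS) S' = T.
  by rewrite -map_comp map_id_in // => K KT /=; case: (lT K KT).
have hS' : all (hyperplane_in fullv) S' by apply/allP => X /S'd /del_A /hypA.
have hHS : all (hyperplane_in fullv) (H :: S') by rewrite /= hypH.
have iHS : independent_in fullv (H :: S').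
  apply/ind_restr => //; first exact: hypH.
  - by move=> X /S'd /del_nsub.
  - by rewrite mS'.
rewrite /BCB /=; split.
- split.
  + by rewrite size_rcons size_map szT.
  + rewrite all_rcons /=; apply/andP; split; first exact: HA.
    by apply/allP => X /S'd /del_A.
  + by apply: ind_perm iHS => //; rewrite perm_sym perm_rcons.
- rewrite sorted_rconsP; apply/andP; split.
    by apply/allP => X /S'd Xd; apply: sig_lt; [exact: del_A | exact: del_neq].
  rewrite sorted_map; apply: (sub_in_sorted (P := mem T)) srtT; last by apply/allP.
  by move=> K1 K2 _ K2T /=; rewrite res_lt //; apply: subT.
move=> G GA GS.
have nGH : G != H by apply: contraNneq GS => ->; rewrite mem_rcons mem_head.
have Gd : G \in del by rewrite mem_del nGH.
have GS' : G \notin S' by apply: contra GS; rewrite mem_rcons inE => ->; rewrite orbT.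
set K := (G :&: H)%VS.
have Kr : K \in res := res_mem Gd.
have [lKd elK minK] := l_res Kr.
have lKG : sigma (l K) <= sigma G := minK G Gd erefl.
rewrite filter_rcons sig_lt //.
set F' := filter (fun H' => sigma G < sigma H') S'.
have F'd : forall X, X \in F' -> X \in del by move=> X; rewrite mem_filter => /andP[_ /S'd].
have hF : all (hyperplane_in fullv) (G :: F').
  by rewrite /= hypA //=; apply/allP => X /F'd /del_A /hypA.
have mF : map (fun X => (X :&: H)%VS) F' = [seq K' <- T | sigma G < sigma (l K')].
  rewrite /F' /S' filter_map -map_comp map_id_in // => K' /=; rewrite mem_filter => /andP[_ K'T].
  by case: (lT K' K'T).
suff iK : independent_in H (K :: [seq K' <- T | sigma G < sigma (l K')]).
  apply: (@ind_perm _ _ _ (H :: G :: F')).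
  - by rewrite /= hypH.
  - by rewrite -rcons_cons perm_sym perm_rcons.
  apply/ind_restr => //; first exact: hypH.
    by move=> X; rewrite inE => /orP[/eqP ->|/F'd]; apply: del_nsub.
  by rewrite /= mF.
have uT := ind_uniq hT iT.
case: (boolP (K \in T)) => KT.
  apply: ind_sub hT iT _ _.
    rewrite /= filter_uniq // andbT mem_filter negb_and -leqNgt lKG //.
  by move=> X; rewrite inE mem_filter => /orP[/eqP ->|/andP[_]].
apply: (ind_sub _ (condT K Kr KT)).
- by rewrite /= res_hyp //=; apply/allP => X; rewrite mem_filter => /andP[_ /subT /res_hyp].
- by rewrite /= filter_uniq // andbT mem_filter negb_and KT orbT.
move=> X; rewrite !inE !mem_filter => /orP[->//|/andP[lt XT]].
rewrite XT res_lt ?subT // andbT; apply/orP; right.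
exact: leq_ltn_trans lKG lt.
Qed.

End Main.

Lemma main_gen (F : fieldType) (V : vectType F)
  (A : seq {vspace V}) (H : {vspace V}) (sigma : {vspace V} -> nat) :
  arrangement_in fullv A -> H \in A ->
  ordering_of A sigma -> compatible A H sigma ->
  forall k : nat, (1 <= k)%N ->
  forall S : seq {vspace V},
    BCB fullv A sigma k S <->
    (BCB fullv (deletion A H) (sigma_del sigma) k S \/
     exists2 T : seq {vspace V},
       BCB H (restriction A H) (sigma_res A H sigma) k.-1 T &
       S = rcons (map (l_sigma A H sigma) T) H).
Proof.
move=> hA HA ord [sH _] k k1 S; split.
  move=> b; case: (boolP (H \in S)) => HS.
    by right; eapply dir1_H; eauto.
  by left; eapply dir1_noH; eauto.
case=> [b | [T bT ->]]; first by eapply dir2_del; eauto.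
by eapply dir2_res; eauto.
Qed.

Unset Implicit Arguments.
Import Order.TTheory GRing.Theory Num.Theory.
Local Open Scope ring_scope.

Theorem mainTheorem5 (R : realType) (V : vectType R[i])
  (A : seq {vspace V}) (H : {vspace V}) (sigma : {vspace V} -> nat) :
  arrangement_in fullv A -> H \in A ->
  ordering_of A sigma -> compatible A H sigma ->
  forall k : nat, (1 <= k)%N ->
  forall S : seq {vspace V},
    BCB fullv A sigma k S <->
    (BCB fullv (deletion A H) (sigma_del sigma) k S \/
     exists2 T : seq {vspace V},
       BCB H (restriction A H) (sigma_res A H sigma) k.-1 T &
       S = rcons (map (l_sigma A H sigma) T) H).
Proof. exact: main_gen. Qed.
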